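(* Let $n\in\mathbb{N}$, let $A$ be a $2n$-adically closed integral domain, and let $p,q$ be prime ideals of $A$. Regard the localizations $A_p$ and $A_q$ as subrings of $\mathrm{Frac}(A)$. Then the join $[A_p,A_q]$ is a local ring.
   Context: All rings are commutative with $1$. A ring $R$ is $k$-adically closed if every monic polynomial of degree $k$ with coefficients in $R$ has a root in $R$. For subrings $A,B$ of a ring $K$, the join $[A,B]$ is the smallest subring of $K$ containing both $A$ and $B$ (equivalently, the set of finite sums $\sum a_ib_i$ with $a_i\in A$, $b_i\in B$). *)

(* Defs.v *)
From HB Require Import structures.
From mathcomp Require Import all_boot all_order all_algebra.
Set Implicit Arguments. Unset Strict Implicit. Unset Printing Implicit Defensive.
Import Order.TTheory GRing.Theory Num.Theory.
Local Open Scope ring_scope.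

Definition adically_closed (R : comNzRingType) (k : nat) : Prop :=
  forall P : {poly R}, P \is monic -> size P = k.+1 -> exists x : R, root P x.

Definition is_ideal (R : comNzRingType) (I : R -> Prop) : Prop :=
  I 0 /\ (forall x y, I x -> I y -> I (x + y)) /\ (forall r x, I x -> I (r * x)).

Definition prime_ideal (R : comNzRingType) (I : R -> Prop) : Prop :=
  is_ideal I /\ ~ I 1 /\ (forall x y, I (x * y) -> I x \/ I y).

Definition tofracF (A : idomainType) (a : A) : {fraction A} := FracField.tofrac a.

Definition localization (A : idomainType) (p : A -> Prop) : {fraction A} -> Prop :=
  fun z => exists a s : A, ~ p s /\ z = tofracF a / tofracF s.

Definition is_subring (K : comNzRingType) (S : K -> Prop) : Prop :=
  S 1 /\ (forall x y, S x -> S y -> S (x - y)) /\ (forall x y, S x -> S y -> S (x * y)).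

Definition join (K : comNzRingType) (S T : K -> Prop) : K -> Prop :=
  fun z => forall U : K -> Prop, is_subring U ->
    (forall x, S x -> U x) -> (forall x, T x -> U x) -> U z.

Definition is_ideal_of (K : comNzRingType) (S I : K -> Prop) : Prop :=
  (forall x, I x -> S x) /\ I 0 /\ (forall x y, I x -> I y -> I (x + y)) /\
  (forall r x, S r -> I x -> I (r * x)).

Definition is_maximal_ideal_of (K : comNzRingType) (S M : K -> Prop) : Prop :=
  is_ideal_of S M /\ ~ M 1 /\
  (forall J, is_ideal_of S J -> ~ J 1 -> (forall x, M x -> J x) -> forall x, J x -> M x).

Definition is_local_subring (K : comNzRingType) (S : K -> Prop) : Prop :=
  exists M, is_maximal_ideal_of S M /\
    forall M', is_maximal_ideal_of S M' -> forall x, M' x <-> M x.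

(* Main.v *)
Require Import Defs.
From HB Require Import structures.
From mathcomp Require Import all_boot all_order all_algebra.
From mathcomp Require Import ring.
From Stdlib Require Import Classical FunctionalExtensionality PropExtensionality.
Set Implicit Arguments. Unset Strict Implicit.
Local Open Scope ring_scope.
Import GRing.Theory.

Lemma pD (A : idomainType) (P : A -> Prop) : prime_ideal P ->
  forall x y, P x -> P y -> P (x + y).
Proof. by case=> [[_ [h _]] _]. Qed.

Lemma pM (A : idomainType) (P : A -> Prop) : prime_ideal P ->
  forall r x, P x -> P (r * x).
Proof. by case=> [[_ [_ h]] _]. Qed.

Lemma pB (A : idomainType) (P : A -> Prop) : prime_ideal P ->
  forall x y, P x -> P y -> P (x - y).
Proof.
move=> hP x y hx hy; rewrite (_ : x - y = x + (-1) * y); last by ring.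
by apply: pD => //; apply: pM.
Qed.

Lemma npD (A : idomainType) (P : A -> Prop) : prime_ideal P ->
  forall x y, ~ P x -> P y -> ~ P (x + y).
Proof.
move=> hP x y hx hy hxy; apply: hx.
by rewrite (_ : x = (x + y) - y); [apply: pB | ring].
Qed.

Lemma npM (A : idomainType) (P : A -> Prop) : prime_ideal P ->
  forall x y, ~ P x -> ~ P y -> ~ P (x * y).
Proof. by case=> _ [_ h] x y hx hy /h []. Qed.

Lemma np1 (A : idomainType) (P : A -> Prop) : prime_ideal P -> ~ P 1.
Proof. by case=> _ []. Qed.

Lemma np_neq0 (A : idomainType) (P : A -> Prop) : prime_ideal P ->
  forall x, ~ P x -> x != 0.
Proof. by case=> [[h0 _] _] x hx; apply/eqP => e; apply: hx; rewrite e. Qed.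

Lemma quad_root (n : nat) (A : idomainType) : adically_closed A (2 * n) ->
  forall c d : A, exists u : A, u ^+ 2 - c * u + d = 0.
Proof.
move=> H c d.
pose f : {poly A} := 'X^2 + ((- c) *: 'X + d%:P).
have hs : (size (((- c) *: 'X + d%:P)%R : {poly A}) < size ('X^2 : {poly A}))%N.
  rewrite size_polyXn; apply: (leq_ltn_trans (size_polyD _ _)).
  rewrite gtn_max; apply/andP; split.
    by apply: (leq_ltn_trans (size_scale_leq _ _)); rewrite size_polyX.
  by apply: (leq_ltn_trans (size_polyC_leq1 _)).
have fm : f \is monic by rewrite monicE /f lead_coefDl // lead_coefXn.
have fs : size f = 3 by rewrite /f size_polyDl // size_polyXn.
have hsz : size (f ^+ n) = (2 * n).+1.
  have := size_exp f n; rewrite fs /= mulnC => <-.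
  by rewrite prednK // size_poly_gt0 monic_neq0 // monic_exp.
have [x hx] := H (f ^+ n) (monic_exp n fm) hsz.
exists x; move: hx; rewrite /root horner_exp expf_eq0 => /andP [_ /eqP].
rewrite /f !hornerE mulNr => h; exact: h.
Qed.

Definition inS (A : idomainType) (p q : A -> Prop) (x : A) :=
  exists s t, ~ p s /\ ~ q t /\ x = s * t.

Lemma key (n : nat) (A : idomainType) (p q : A -> Prop) :
  adically_closed A (2 * n) -> prime_ideal p -> prime_ideal q ->
  forall a s t, ~ p s -> ~ q t -> inS p q a \/ inS p q (s * t - a).
Proof.
move=> H hp hq a s t hs ht.
case: (classic (p a)) => pa; last by left; exists a, 1; split=> //; split;
  [exact: np1 | ring].
case: (classic (q a)) => qa; last by left; exists 1, a; split; [exact: np1|split=>//; ring].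
case: (classic (p (s * t - a))) => pb; last by right; exists (s*t - a), 1; split=> //; split;
  [exact: np1 | ring].
case: (classic (q (s * t - a))) => qb; last by right; exists 1, (s*t-a); split; [exact: np1|split=>//; ring].
have pst : p (s * t) by rewrite (_ : s * t = (s * t - a) + a); [apply: pD | ring].
have qst : q (s * t) by rewrite (_ : s * t = (s * t - a) + a); [apply: pD | ring].
have pt : p t by case: hp => _ [_ /(_ _ _ pst)] [].
have qs : q s by case: hq => _ [_ /(_ _ _ qst)] [].
have aux : forall u v, u + v = s + t -> u * v = a -> p u -> inS p q a \/ inS p q (s * t - a).
  move=> u v huv hab pu.
  have npv : ~ p v.
    move=> pv; apply: hs; rewrite (_ : s = (u + v) - t); last by rewrite huv; ring.
    by apply: pB => //; apply: pD.
  have : q (u * v) by rewrite hab.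
  case: hq => hqi [hq1 hqp]; case/hqp => [qu | qv].
    right; exists (s - u), (t - u); split.
      move=> h; apply: hs; rewrite (_ : s = (s - u) + u); [exact: pD | ring].
    split.
      move=> h; apply: ht; rewrite (_ : t = (t - u) + u); [exact: pD | ring].
    rewrite -hab (_ : v = s + t - u); last by rewrite -huv; ring.
    ring.
  left; exists v, u; split=> //; split; last by rewrite -hab; ring.
  move=> h; apply: ht; rewrite (_ : t = (u + v) - s); last by rewrite huv; ring.
  have hq' : prime_ideal q by [].
  by apply: pB => //; apply: pD.
have [u hu] := quad_root H (s + t) a.
have huv : u + (s + t - u) = s + t by ring.
have hab : u * (s + t - u) = a.
  by rewrite (_ : a = a - (u ^+ 2 - (s + t) * u + a)); [ring | rewrite hu; ring].
have : p (u * (s + t - u)) by rewrite hab.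
case: hp => hpi [hp1 hpp]; case/hpp => h.
  by apply: (aux _ _ huv hab).
by apply: (aux (s + t - u) u); [ring | rewrite mulrC | ].
Qed.

Lemma sub0 (K : comNzRingType) (S : K -> Prop) : is_subring S -> S 0.
Proof. by case=> h1 [hB _]; rewrite -(subrr 1); apply: hB. Qed.

Lemma subD (K : comNzRingType) (S : K -> Prop) : is_subring S ->
  forall x y, S x -> S y -> S (x + y).
Proof.
move=> hS x y hx hy; case: (hS) => h1 [hB _].
rewrite (_ : x + y = x - (0 - y)); last by ring.
apply: (hB) => //; apply: (hB) => //; exact: sub0.
Qed.

Lemma subM (K : comNzRingType) (S : K -> Prop) : is_subring S ->
  forall x y, S x -> S y -> S (x * y).
Proof. by case=> _ []. Qed.

Definition Bc (A : idomainType) (p q : A -> Prop) : {fraction A} -> Prop :=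
  fun z => exists a s t, ~ p s /\ ~ q t /\ z = tofracF a / (tofracF s * tofracF t).

Lemma tf_neq0 (A : idomainType) (p : A -> Prop) : prime_ideal p ->
  forall s, ~ p s -> tofracF s != 0.
Proof. by move=> hp s hs; rewrite /tofracF tofrac_eq0; apply: (np_neq0 hp). Qed.

Lemma fsub (F : fieldType) (a s t a' s' t' : F) : s != 0 -> t != 0 -> s' != 0 -> t' != 0 ->
  a / (s * t) - a' / (s' * t') = (a * s' * t' - a' * s * t) / (s * s' * (t * t')).
Proof. move=> *; field; apply/and4P; split=> //. Qed.
Lemma fmul (F : fieldType) (a s t a' s' t' : F) : s != 0 -> t != 0 -> s' != 0 -> t' != 0 ->
  a / (s * t) * (a' / (s' * t')) = (a * a') / (s * s' * (t * t')).
Proof. move=> *; field; apply/and4P; split=> //. Qed.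

Lemma Bc_subring (A : idomainType) (p q : A -> Prop) :
  prime_ideal p -> prime_ideal q -> is_subring (Bc p q).
Proof.
move=> hp hq; split; [|split].
- exists 1, 1, 1; split; [exact: np1|split; [exact: np1|]].
  by rewrite /tofracF rmorph1 mulr1 divr1.
- move=> x y [a [s [t [hs [ht ->]]]]] [a' [s' [t' [hs' [ht' ->]]]]].
  exists (a * s' * t' - a' * s * t), (s * s'), (t * t').
  split; first exact: npM. split; first exact: npM.
  rewrite /tofracF !rmorphB !rmorphM.
  by apply: fsub; [exact: (tf_neq0 hp hs) | exact: (tf_neq0 hq ht) | exact: (tf_neq0 hp hs') | exact: (tf_neq0 hq ht')].
- move=> x y [a [s [t [hs [ht ->]]]]] [a' [s' [t' [hs' [ht' ->]]]]].
  exists (a * a'), (s * s'), (t * t').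
  split; first exact: npM. split; first exact: npM.
  rewrite /tofracF !rmorphM.
  by apply: fmul; [exact: (tf_neq0 hp hs) | exact: (tf_neq0 hq ht) | exact: (tf_neq0 hp hs') | exact: (tf_neq0 hq ht')].
Qed.
Lemma fone (F : fieldType) (a s : F) : s != 0 -> a / s = a / (s * 1).
Proof. by move=> _; rewrite mulr1. Qed.
Lemma fsplit (F : fieldType) (a s t : F) : a / (s * t) = (a / s) * (1 / t).
Proof. by rewrite invfM mulrA div1r. Qed.

Lemma join_Bc (A : idomainType) (p q : A -> Prop) :
  prime_ideal p -> prime_ideal q -> join (localization p) (localization q) = Bc p q.
Proof.
move=> hp hq; apply: functional_extensionality => z; apply: propositional_extensionality.
split.
- move=> hz; apply: hz; first exact: Bc_subring.
  + move=> x [a [s [hs ->]]]; exists a, s, 1; split=> //; split; first exact: np1.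
    by rewrite /tofracF rmorph1 mulr1.
  + move=> x [a [s [hs ->]]]; exists a, 1, s; split; first exact: np1; split=> //.
    by rewrite /tofracF rmorph1 mul1r.
- move=> [a [s [t [hs [ht ->]]]]] U hU hp' hq'.
  rewrite fsplit; apply: subM => //; first by apply: hp'; exists a, s.
  by apply: hq'; exists 1, t; split=> //; rewrite /tofracF rmorph1.
Qed.

Definition unitB (A : idomainType) (p q : A -> Prop) (z : {fraction A}) :=
  exists y, Bc p q y /\ z * y = 1.

Lemma finv (F : fieldType) (s t s' t' : F) : s != 0 -> t != 0 -> s' != 0 -> t' != 0 ->
  (s' * t') / (s * t) * ((s * t) / (s' * t')) = 1.
Proof. move=> *; field; apply/and4P; split=> //. Qed.

Lemma unit_of (A : idomainType) (p q : A -> Prop) :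
  prime_ideal p -> prime_ideal q -> forall b s t, ~ p s -> ~ q t -> inS p q b ->
  unitB p q (tofracF b / (tofracF s * tofracF t)).
Proof.
move=> hp hq b s t hs ht [s' [t' [hs' [ht' ->]]]].
exists (tofracF (s * t) / (tofracF s' * tofracF t')); split.
  by exists (s * t), s', t'.
rewrite /tofracF !rmorphM; apply: finv.
- exact: (tf_neq0 hp hs).
- exact: (tf_neq0 hq ht).
- exact: (tf_neq0 hp hs').
- exact: (tf_neq0 hq ht').
Qed.

Lemma fsub1 (F : fieldType) (a s t : F) : s != 0 -> t != 0 ->
  1 - a / (s * t) = (s * t - a) / (s * t).
Proof. move=> *; field; apply/andP; split=> //. Qed.

Lemma key2 (n : nat) (A : idomainType) (p q : A -> Prop) :
  adically_closed A (2 * n) -> prime_ideal p -> prime_ideal q ->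
  forall z, Bc p q z -> unitB p q z \/ unitB p q (1 - z).
Proof.
move=> H hp hq z [a [s [t [hs [ht ->]]]]].
case: (key H hp hq a hs ht) => h; first by left; apply: unit_of.
right; rewrite fsub1; [|exact: (tf_neq0 hp hs)|exact: (tf_neq0 hq ht)].
have -> : tofracF s * tofracF t - tofracF a = tofracF (s * t - a).
  by rewrite /tofracF rmorphB rmorphM.
exact: unit_of.
Qed.
Theorem mainTheorem6 (n : nat) (A : idomainType) (p q : A -> Prop) :
  adically_closed A (2 * n) -> prime_ideal p -> prime_ideal q ->
  is_local_subring (join (localization p) (localization q)).
Proof.
move=> H hp hq; rewrite join_Bc //.
have hB := Bc_subring hp hq.
pose M := fun z => Bc p q z /\ ~ unitB p q z.
have nonunit_J : forall J, is_ideal_of (Bc p q) J -> ~ J 1 -> forall x, J x -> M x.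
  move=> J [hJB [_ [_ hJM]]] hJ1 x hx; split; first exact: hJB.
  move=> [y [hy hxy]]; apply: hJ1; rewrite -hxy mulrC; exact: hJM.
have Mid : is_ideal_of (Bc p q) M.
  split; first by move=> x [].
  split.
    split; first exact: sub0.
    by move=> [y [_]]; rewrite mul0r => /eqP; rewrite eq_sym oner_eq0.
  split.
    move=> x y [bx ux] [by' uy]; split; first exact: subD.
    move=> [w [hw hxyw]].
    case: (key2 H hp hq (subM hB bx hw)) => [[v [hv hv1]]|[v [hv hv1]]].
      by apply: ux; exists (w * v); split; [exact: subM | rewrite mulrA].
    apply: uy; exists (w * v); split; first exact: subM.
    by rewrite mulrA -hv1 -[in RHS]hxyw; congr (_ * _); ring.
  move=> r x hr [bx ux]; split; first exact: subM.
  move=> [w [hw hrxw]]; apply: ux; exists (r * w); split; first exact: subM.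
  by rewrite -hrxw; ring.
have M1 : ~ M 1.
  by move=> [_ []]; exists 1; split; [case: hB | rewrite mulr1].
exists M; split.
  split=> //; split=> //.
  move=> J hJ hJ1 _ x hx; exact: nonunit_J hJ hJ1 x hx.
move=> M' [hM' [hM'1 hmax]] x; split.
  exact: nonunit_J hM' hM'1 x.
by apply: hmax => // y; apply: nonunit_J.
Qed.
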